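(* Let $\mathcal{V}$ be a finite vocabulary, fix a decoding context $c$, let $P(\cdot\mid c)$ be the base next-token distribution on $\mathcal{V}$, and let $t_1 := \arg\max_{t} P(t\mid c)$ be the base model's top token. Let $\mathcal{V}$ be partitioned into $n \ge 1$ buckets and let the required bucket be drawn uniformly at random from the $n$ buckets; let $t^\star$ denote the highest-$P(\cdot\mid c)$-probability token in the required bucket. For each possible required bucket, let $Q(\cdot\mid c)$ be any probability distribution on $\mathcal{V}$ satisfying $Q(t^\star\mid c) \ge Q(t\mid c)$ for all $t\in\mathcal{V}$ (so $t^\star$ is an argmax of $Q$). Define the per-token perplexity \[ \mathrm{PPL}(Q) := \exp\Bigl(\mathbb{E}\bigl[-\log Q(t_1\mid c)\bigr]\Bigr), \] where the expectation is over the uniformly random required bucket. Then \[ \mathrm{PPL}(Q) \;\ge\; 2^{(n-1)/n}. \]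
   Context: Logarithms are natural. The channel carries $\log_2 n$ bits per token; perplexity of the steganographic distribution $Q$ is evaluated on the base model's top token $t_1$. *)

(* Defs.v *)
From HB Require Import structures.
From mathcomp Require Import all_boot all_order all_algebra.
From mathcomp Require Import all_classical all_reals all_analysis.
Set Implicit Arguments. Unset Strict Implicit. Unset Printing Implicit Defensive.
Import Order.TTheory GRing.Theory Num.Theory.
Local Open Scope ring_scope.

Definition neglog {R : realType} (x : R) : \bar R :=
  if (0 < x) then (- ln x)%:E else +oo%E.

(* Per-token perplexity: exp of the expectation, over a uniformly random
   required bucket j : 'I_n, of -log Q_j(t1). *)
Definition ppl {R : realType} (n : nat) (q_t1 : 'I_n -> R) : \bar R :=
  expeR (\sum_(j < n) ((n%:R)^-1)%:E * neglog (q_t1 j))%E.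

(* Main.v *)
Require Import Defs.
From HB Require Import structures.
From mathcomp Require Import all_boot all_order all_algebra.
From mathcomp Require Import all_classical all_reals all_analysis.
From mathcomp Require Import lra.
Import Order.TTheory GRing.Theory Num.Theory.
Local Open Scope ring_scope.

Theorem theorem7p2 (R : realType) (V : finType) (P : V -> R)
  (n : nat) (bucket : V -> 'I_n) (t1 : V) (tstar : 'I_n -> V)
  (Q : 'I_n -> V -> R) :
  (0 < n)%N ->
  (forall t, 0 <= P t) -> \sum_(t : V) P t = 1 ->
  (forall t, P t <= P t1) ->
  (forall j, bucket (tstar j) = j) ->
  (forall j t, bucket t = j -> P t <= P (tstar j)) ->
  (forall j t, 0 <= Q j t) -> (forall j, \sum_(t : V) Q j t = 1) ->
  (forall j t, Q j t <= Q j (tstar j)) ->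
  (((2 : R) `^ ((n%:R - 1) / n%:R))%:E <= ppl (fun j => Q j t1))%E.
Proof.
move=> n0 _ _ _ Hb _ Q0 Q1 Qmax.
set b0 := bucket t1.
pose c j : R := if j == b0 then 0 else ln 2.
have ninv0 : 0 < (n%:R : R)^-1 by rewrite invr_gt0 ltr0n.
have Hle1 : forall j t, Q j t <= 1.
  move=> j t; rewrite -(Q1 j) (bigD1 t) //= lerDl; exact: sumr_ge0.
have Hle2 : forall j, j != b0 -> Q j t1 <= 2^-1.
  move=> j hj.
  have ht : tstar j != t1.
    apply/eqP => e; move: hj; rewrite /b0 -e Hb eqxx //.
  have : Q j t1 + Q j (tstar j) <= 1.
    rewrite -(Q1 j) (bigD1 t1) //= (bigD1 (tstar j)) /=; last by rewrite ht.
    rewrite addrA lerDl; exact: sumr_ge0.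
  have := Qmax j t1; move=> ? ?; lra.
have key : forall j, ((n%:R^-1 * c j)%:E <= (n%:R^-1)%:E * neglog (Q j t1))%E.
  move=> j; rewrite /neglog; case: ifP => qp; last first.
    by rewrite mulry gtr0_sg // mul1e leey.
  rewrite -EFinM lee_fin; apply: ler_wpM2l; first exact: ltW.
  rewrite /c; case: ifP => hj.
    rewrite oppr_ge0; apply: ln_le0; exact: Hle1.
  rewrite lerNr -lnV ?posrE //; rewrite ler_ln ?posrE ?invr_gt0 //.
  by apply: Hle2; rewrite hj.
have Hsum : \sum_(j < n) c j = (n%:R - 1) * ln 2.
  have hb : b0 \in 'I_n by [].
  rewrite (bigD1 b0) //= /c eqxx add0r.
  rewrite (eq_bigr (fun _ => ln 2)); last by move=> i /negbTE ->.
  rewrite sumr_const cardC1 card_ord -mulr_natl.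
  have e : (n.-1)%:R = n%:R - 1 :> R by rewrite -subn1 natrB.
  by rewrite -e; symmetry; apply: mulr_natl.
apply: (@le_trans _ _ (expeR (\sum_(j < n) (n%:R^-1 * c j)%:E))); last first.
  rewrite /ppl lee_expeR; exact: lee_sum.
rewrite sumEFin -mulr_sumr Hsum /= lee_fin.
rewrite -{1}(@lnK R 2) ?posrE // -expRM.
have -> : (n%:R^-1 * ((n%:R - 1) * ln 2)) = ln 2 * ((n%:R - 1) / n%:R) :> R.
  by rewrite mulrC (mulrC (n%:R - 1)) -mulrA.
by [].
Qed.
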